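(* Let $s\ge 1$ and $n\ge 2$ be integers and let $A=(a_{i,j})$ be a real $s\times s$ matrix with all entries non-negative. Then \[ s^{\,n-1}\,\mathrm{tr}(A^n)\ \ge\ \big(\mathrm{tr}(A)\big)^n. \] Moreover, for $n=2$ equality holds if and only if $a_{k,k}=a_{1,1}$ for all $k=2,\dots,s$ and $a_{i,j}a_{j,i}=0$ for all $i\ne j$; and for $n\ge 3$, equality $s^{n-1}\mathrm{tr}(A^n)=(\mathrm{tr}A)^n$ implies $a_{k,k}=a_{1,1}$ for all $k=2,\dots,s$. *)

(* Defs.v *)
From HB Require Import structures.
From mathcomp Require Import all_boot all_order all_algebra.
Set Implicit Arguments. Unset Strict Implicit. Unset Printing Implicit Defensive.

(* Main.v *)
Require Import Defs.
From HB Require Import structures.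
From mathcomp Require Import all_boot all_order all_algebra.
From mathcomp Require Import ring.
Import Order.TTheory GRing.Theory Num.Theory.
Local Open Scope ring_scope.

Section S.
Variable R : realFieldType.

Lemma pow_ge0 s (A : 'M[R]_s) : (forall i j, 0 <= A i j) ->
  forall n i j, 0 <= (A ^+ n) i j.
Proof.
move=> H; elim=> [|n IH] i j.
  by rewrite expr0 !mxE ler0n.
rewrite exprSr -mulmxE mxE; apply: sumr_ge0 => k _; exact: mulr_ge0.
Qed.

Lemma pow_diag s (A : 'M[R]_s) : (forall i j, 0 <= A i j) ->
  forall n i, (A i i) ^+ n <= (A ^+ n) i i.
Proof.
move=> H; elim=> [|n IH] i.
  by rewrite expr0 !mxE eqxx.
rewrite [A ^+ _]exprSr -mulmxE mxE (bigD1 i) //=.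
rewrite -[leLHS]addr0 lerD //; last first.
  by apply: sumr_ge0 => k _; apply: mulr_ge0 => //; exact: pow_ge0.
rewrite exprSr; apply: ler_pM => //; exact: exprn_ge0.
Qed.

Lemma cheb_id s (x y : 'I_s -> R) :
  \sum_i \sum_j (x i - x j) * (y i - y j) =
  2%:R * (s%:R * \sum_i x i * y i - (\sum_i x i) * (\sum_i y i)).
Proof.
have E : forall i, \sum_j (x i - x j) * (y i - y j) =
   s%:R * (x i * y i) + \sum_j x j * y j - x i * (\sum_j y j) - y i * (\sum_j x j).
  move=> i.
  have e : forall j, (x i - x j) * (y i - y j) =
      x i * y i + x j * y j - x i * y j - y i * x j by move=> j; ring.
  under eq_bigr => j _ do rewrite e.
  rewrite !sumrB big_split /= sumr_const card_ord mulr_natl -!mulr_sumr //.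
under eq_bigr => i _ do rewrite E.
rewrite !sumrB big_split /= sumr_const card_ord -!mulr_sumr -!mulr_suml.
rewrite -mulr_natl; ring.
Qed.

Lemma cheb s (x : 'I_s -> R) m : (forall i, 0 <= x i) ->
  (\sum_i x i) * (\sum_i x i ^+ m) <= s%:R * \sum_i x i ^+ m.+1
  /\ ((\sum_i x i) * (\sum_i x i ^+ m) = s%:R * \sum_i x i ^+ m.+1 ->
      (0 < m)%N -> forall i j, x i = x j).
Proof.
move=> H.
have T : forall i j, 0 <= (x i - x j) * (x i ^+ m - x j ^+ m).
  move=> i j; case: (leP (x i) (x j)) => h.
    rewrite -mulrNN; apply: mulr_ge0; rewrite oppr_ge0 subr_le0 //.
    by apply: lerXn2r => //; rewrite nnegrE.
  apply: mulr_ge0; rewrite subr_ge0; first exact: ltW.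
  by apply: lerXn2r => //; [rewrite nnegrE | rewrite nnegrE | exact: ltW].
have C := cheb_id s x (fun i => x i ^+ m).
have Es : forall i, x i * x i ^+ m = x i ^+ m.+1 by move=> i; rewrite exprS.
rewrite (eq_bigr _ (fun i _ => Es i)) in C.
have G : 0 <= \sum_i \sum_j (x i - x j) * (x i ^+ m - x j ^+ m).
  by apply: sumr_ge0 => i _; apply: sumr_ge0.
split.
  rewrite C in G; rewrite -subr_ge0; move: G; rewrite pmulr_rge0 //.
move=> Heq m0 i j.
have Z : \sum_i \sum_j (x i - x j) * (x i ^+ m - x j ^+ m) = 0.
  by rewrite C Heq subrr mulr0.
move/eqP: Z; rewrite psumr_eq0; last by move=> k _; apply: sumr_ge0.
move/allP => /(_ i (mem_index_enum _)) /=.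
rewrite psumr_eq0 // => /allP /(_ j (mem_index_enum _)) /=.
rewrite mulf_eq0 subr_eq0 => /orP [/eqP //|].
rewrite subr_eq0 eqrXn2 // => /eqP //.
Qed.

Lemma pmean s (x : 'I_s -> R) m : (forall i, 0 <= x i) ->
  (\sum_i x i) ^+ m.+1 <= s%:R ^+ m * \sum_i x i ^+ m.+1.
Proof.
move=> H; elim: m => [|m IH].
  rewrite expr0 mul1r expr1 le_eqVlt; apply/orP; left; apply/eqP; apply: eq_bigr => i _; by rewrite expr1.
have a0 : 0 <= \sum_i x i by apply: sumr_ge0.
have [c1 _] := cheb s x m.+1 H.
rewrite exprS; apply: (le_trans (ler_wpM2l a0 IH)).
rewrite mulrCA exprSr -mulrA; apply: ler_wpM2l; first exact: exprn_ge0.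
exact: c1.
Qed.

Lemma pmean_eq s (x : 'I_s -> R) k : (1 <= s)%N -> (forall i, 0 <= x i) ->
  s%:R ^+ k.+1 * \sum_i x i ^+ k.+2 = (\sum_i x i) ^+ k.+2 ->
  forall i j, x i = x j.
Proof.
move=> s1 H E.
have a0 : 0 <= \sum_i x i by apply: sumr_ge0.
have [c1 c2] := cheb s x k.+1 H.
have IH := pmean s x k H.
have c0 : 0 < s%:R ^+ k :> R by apply: exprn_gt0; rewrite ltr0n.
have h1 : (\sum_i x i) ^+ k.+2 <= s%:R ^+ k * ((\sum_i x i) * \sum_i x i ^+ k.+1).
  by rewrite exprS mulrCA; apply: ler_wpM2l.
have h2 : s%:R ^+ k * ((\sum_i x i) * \sum_i x i ^+ k.+1) <=
   s%:R ^+ k * (s%:R * \sum_i x i ^+ k.+2) by apply: ler_wpM2l => //; exact: ltW.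
apply: c2 => //; apply: (mulfI (lt0r_neq0 c0)); apply: le_anti.
rewrite h2 /= (le_trans _ h1) //.
by rewrite -E exprSr mulrA.
Qed.
End S.

Lemma sq_entry (R : realFieldType) s (A : 'M[R]_s) i :
  (A ^+ 2) i i = A i i ^+ 2 + \sum_(j | j != i) A i j * A j i.
Proof. by rewrite expr2 -mulmxE mxE (bigD1 i) //= expr2. Qed.

Theorem lemma2p12 (R : realFieldType) (s n : nat) (A : 'M[R]_s) :
  (1 <= s)%N -> (2 <= n)%N -> (forall i j, 0 <= A i j) ->
  [/\ (\tr A) ^+ n <= s%:R ^+ (n - 1) * \tr (A ^+ n),
      n = 2%N ->
        (s%:R ^+ (n - 1) * \tr (A ^+ n) = (\tr A) ^+ n <->
         (forall k : 'I_s, forall i1 : 'I_s, nat_of_ord i1 = 0%N -> A k k = A i1 i1) /\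
         (forall i j : 'I_s, i != j -> A i j * A j i = 0))
    & (3 <= n)%N -> s%:R ^+ (n - 1) * \tr (A ^+ n) = (\tr A) ^+ n ->
        forall k : 'I_s, forall i1 : 'I_s, nat_of_ord i1 = 0%N -> A k k = A i1 i1].
Proof.
move=> s1 n2 H.
have d0 : forall i, 0 <= A i i by move=> i; apply: H.
have s0 : 0 < s%:R :> R by rewrite ltr0n.
have trd : forall n, \sum_i A i i ^+ n <= \tr (A ^+ n).
  by move=> k; rewrite /mxtrace; apply: ler_sum => i _; apply: pow_diag.
have ineq : forall m, (\tr A) ^+ m.+1 <= s%:R ^+ m * \tr (A ^+ m.+1).
  move=> m; have P := @pmean R s (fun i => A i i) m d0; rewrite /= in P.
  rewrite {1}/mxtrace; apply: (le_trans P).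
  by apply: ler_wpM2l; [apply: exprn_ge0; exact: ltW | apply: trd].
have eqd : forall k, s%:R ^+ k.+1 * \tr (A ^+ k.+2) = (\tr A) ^+ k.+2 ->
    forall i j, A i i = A j j.
  move=> k E; apply: (@pmean_eq R s (fun i => A i i) k s1 d0).
  apply: le_anti; rewrite (@pmean R s (fun i => A i i) k.+1 d0) andbT.
  apply: (le_trans (y := s%:R ^+ k.+1 * \tr (A ^+ k.+2))).
    by apply: ler_wpM2l; [apply: exprn_ge0; exact: ltW | apply: trd].
  by rewrite E.
case: n n2 => [|[|k]] // _.
rewrite subn1 /=.
split.
- exact: ineq.
- case=> ->. split.
  + move=> E; split; first by move=> i j _; apply: (eqd 0%N).
    have E2 : \tr (A ^+ 2) = \sum_i A i i ^+ 2.
      apply: le_anti; rewrite trd andbT.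
      rewrite -(ler_pM2l s0) expr1 in E *.
      by rewrite E; apply: (@pmean R s (fun i => A i i) 1 d0).
    move/eqP: E2; rewrite /mxtrace -subr_eq0 -sumrB.
    rewrite psumr_eq0; last first.
      by move=> i _; rewrite subr_ge0; apply: pow_diag.
    move/allP => Z i j ij.
    move: (Z i (mem_index_enum _)) => /=.
    rewrite sq_entry addrAC subrr add0r psumr_eq0; last first.
      by move=> l _; apply: mulr_ge0.
    move/allP/(_ j (mem_index_enum _)) => /=.
    by rewrite eq_sym ij => /eqP.
  + case=> Hd Ho.
    pose i0 : 'I_s := Ordinal s1.
    have Hd' : forall l, A l l = A i0 i0 by move=> l; apply: Hd.
    rewrite /mxtrace.
    have Esq : forall i, (A ^+ 2) i i = A i0 i0 ^+ 2.
      move=> i; rewrite sq_entry big1 ?addr0 ?(Hd' i) // => j ji.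
      by apply: Ho; rewrite eq_sym.
    rewrite (eq_bigr _ (fun i _ => Esq i)) (eq_bigr _ (fun i _ => Hd' i)).
    rewrite !sumr_const card_ord -(mulr_natl (A i0 i0 ^+ 2)) -(mulr_natl (A i0 i0)); ring.
- move=> _ E k' i1 _; exact: (eqd k E).
Qed.
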